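(* Let $T$ be a tree and let $S$ be a covering strategy for $T$ with $k$ robots (at prescribed starting vertices) of minimum length among all such covering strategies. If an edge $(x,y)$ of $T$ is traversed by at least two different robots in $S$, then all robots that traverse $(x,y)$ traverse it in the same direction (either all from $x$ to $y$, or all from $y$ to $x$).
   Context: A walk in $T$ is a sequence $W=(u_1,\dots,u_m)$ of vertices in which consecutive terms are equal or adjacent; it traverses edge $(x,y)$ from $x$ to $y$ when $u_i=x,u_{i+1}=y$ for some $i$. Its length is the number of indices $i$ with $u_i\neq u_{i+1}$. A strategy with $k$ robots is a $k$-tuple of walks, walk $i$ starting at robot $i$'s prescribed starting vertex; it is covering if every vertex of $T$ is in some walk; its length is the sum of the lengths of its walks. *)

(* Defs.v *)
From mathcomp Require Import all_boot.
Set Implicit Arguments. Unset Strict Implicit. Unset Printing Implicit Defensive.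

Definition simple_graph (V : finType) (e : rel V) : Prop :=
  symmetric e /\ irreflexive e.

Definition acyclic (V : finType) (e : rel V) : Prop :=
  forall c : seq V, 3 <= size c -> uniq c -> ~~ cycle e c.

Definition connected (V : finType) (e : rel V) : Prop :=
  forall x y : V, connect e x y.

Definition is_tree (V : finType) (e : rel V) : Prop :=
  [/\ simple_graph e, connected e & acyclic e].

Definition wstep (V : finType) (e : rel V) : rel V :=
  fun a b => (a == b) || e a b.

(* A walk is represented as its first vertex [s] followed by the sequence [p]
   of subsequent vertices, i.e. W = s :: p. *)
Definition is_walk (V : finType) (e : rel V) (s : V) (p : seq V) : bool :=
  path (wstep e) s p.

Definition wpairs (V : finType) (s : V) (p : seq V) : seq (V * V) :=
  zip (s :: p) p.

Definition wlength (V : finType) (s : V) (p : seq V) : nat :=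
  count (fun uv : V * V => uv.1 != uv.2) (wpairs s p).

Definition traverses (V : finType) (s : V) (p : seq V) (x y : V) : bool :=
  (x, y) \in wpairs s p.

Definition is_strategy (V : finType) (e : rel V) (k : nat)
  (st : 'I_k -> V) (W : 'I_k -> seq V) : Prop :=
  forall i, is_walk e (st i) (W i).

Definition covering (V : finType) (k : nat)
  (st : 'I_k -> V) (W : 'I_k -> seq V) : Prop :=
  forall v : V, exists i : 'I_k, v \in st i :: W i.

Definition slength (V : finType) (k : nat)
  (st : 'I_k -> V) (W : 'I_k -> seq V) : nat :=
  \sum_(i < k) wlength (st i) (W i).

Definition optimal_covering (V : finType) (e : rel V) (k : nat)
  (st : 'I_k -> V) (W : 'I_k -> seq V) : Prop :=
  [/\ is_strategy e st W, covering st W &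
      forall W' : 'I_k -> seq V, is_strategy e st W' -> covering st W' ->
        slength st W <= slength st W'].

(* Main.v *)
Require Import Defs.
From mathcomp Require Import all_boot.
From mathcomp Require Import zify.
Set Implicit Arguments. Unset Strict Implicit. Unset Printing Implicit Defensive.

Section Aux.
Variable V : finType.
Variable e : rel V.

Definition fl (w : seq V) : nat :=
  count (fun uv : V * V => uv.1 != uv.2) (zip w (behead w)).
Definition fw (w : seq V) : bool :=
  if w is s :: p then path (wstep e) s p else true.

Lemma fl_cons2 c d w : fl (c :: d :: w) = (c != d) + fl (d :: w).
Proof. by []. Qed.

Lemma fl_cat q x r : fl (q ++ x :: r) = fl (q ++ [:: x]) + fl (x :: r).
Proof.
elim: q => [|c q IH] //=.
case: q IH => [|d q] IH /=.
  by rewrite fl_cons2 /fl /= addn0.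
by rewrite -/(fl (c :: d :: (q ++ x :: r))) fl_cons2 IH addnA.
Qed.

Lemma fw_cat q x r : fw (q ++ x :: r) = fw (q ++ [:: x]) && fw (x :: r).
Proof.
case: q => [|c q] //=.
by rewrite !cat_path /= andbT andbA.
Qed.

Lemma split_pairs (s : V) p (x y : V) : (x, y) \in wpairs s p ->
  exists q r, s :: p = q ++ x :: y :: r.
Proof.
elim: p s => [|c p IH] s //=.
rewrite /wpairs /= in_cons => /orP [/eqP [-> ->] | H].
  by exists [::], p.
have [q [r E]] := IH c H.
by exists (s :: q), r; rewrite E.
Qed.

Lemma head_fix (s : V) p q x y r rb : s :: p = q ++ x :: y :: r ->
  s :: behead (q ++ x :: rb) = q ++ x :: rb.
Proof. by case: q => [|c q] /= [-> _]. Qed.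

End Aux.

Lemma swap (V : finType) (e : rel V) (k : nat)
  (st : 'I_k -> V) (W : 'I_k -> seq V) (x y : V) (a b : 'I_k) :
  optimal_covering e st W -> x != y -> a != b ->
  traverses (st a) (W a) x y -> traverses (st b) (W b) y x -> False.
Proof.
move=> [isS cov opt] nxy nab Ta Tb.
have [qa [ra Ea]] := split_pairs (Ta : (x,y) \in wpairs _ _).
have [qb [rb Eb]] := split_pairs (Tb : (y,x) \in wpairs _ _).
pose W' := fun i => if i == a then behead (qa ++ x :: rb)
                    else if i == b then behead (qb ++ y :: ra) else W i.
have Fa : st a :: W' a = qa ++ x :: rb by rewrite /W' eqxx; apply: head_fix Ea.
have Fb : st b :: W' b = qb ++ y :: ra.
  by rewrite /W' eq_sym (negbTE nab) eqxx; apply: head_fix Eb.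
have Fo : forall i, i != a -> i != b -> W' i = W i.
  by move=> i /negbTE ha /negbTE hb; rewrite /W' ha hb.
have wa := isS a; have wb := isS b.
rewrite /is_walk -/(fw e (st a :: W a)) Ea fw_cat in wa.
rewrite /is_walk -/(fw e (st b :: W b)) Eb fw_cat in wb.
have S' : is_strategy e st W'.
  move=> i; rewrite /is_walk.
  have [->|ha] := eqVneq i a.
    rewrite -/(fw e (st a :: W' a)) Fa fw_cat.
    by move: wa wb => /andP [-> _] /andP [_ /= /andP [_ ->]].
  have [->|hb] := eqVneq i b.
    rewrite -/(fw e (st b :: W' b)) Fb fw_cat.
    by move: wa wb => /andP [_ /= /andP [_ ->]] /andP [-> _].
  by rewrite Fo //; apply: isS.
have C' : covering st W'.
  move=> v; have [i Hi] := cov v.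
  have [Hia|ha] := eqVneq i a.
    subst i; move: Hi; rewrite Ea !(mem_cat, in_cons) => /or3P [H|H|/orP [H|H]].
    - by exists a; rewrite Fa mem_cat H.
    - by exists a; rewrite Fa mem_cat in_cons H orbT.
    - by exists b; rewrite Fb mem_cat in_cons H orbT.
    - by exists b; rewrite Fb mem_cat in_cons H !orbT.
  have [Hib|hb] := eqVneq i b.
    subst i; move: Hi; rewrite Eb !(mem_cat, in_cons) => /or3P [H|H|/orP [H|H]].
    - by exists b; rewrite Fb mem_cat H.
    - by exists b; rewrite Fb mem_cat in_cons H orbT.
    - by exists a; rewrite Fa mem_cat in_cons H orbT.
    - by exists a; rewrite Fa mem_cat in_cons H !orbT.
  by exists i; rewrite Fo.
have := opt W' S' C'.
rewrite /slength (bigD1 a) //= [X in _ <= X](bigD1 a) //=.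
have nba : b != a by rewrite eq_sym.
rewrite (bigD1 (P := fun i => i != a) b) // (bigD1 (P := fun i => i != a) b) //=.
have -> : \sum_(i < k | (i != a) && (i != b)) wlength (st i) (W' i) =
          \sum_(i < k | (i != a) && (i != b)) wlength (st i) (W i).
  by apply: eq_bigr => i /andP [ha hb]; rewrite Fo.
change (wlength (st a) (W a)) with (fl (st a :: W a)).
change (wlength (st b) (W b)) with (fl (st b :: W b)).
change (wlength (st a) (W' a)) with (fl (st a :: W' a)).
change (wlength (st b) (W' b)) with (fl (st b :: W' b)).
rewrite Fa Fb Ea Eb (fl_cat qa x (y :: ra)) (fl_cat qb y (x :: rb)).
rewrite (fl_cat qa x rb) (fl_cat qb y ra) !fl_cons2 nxy eq_sym nxy /=.
move: (fl (qa ++ _)) (fl (y :: ra)) (fl (qb ++ _)) (fl (x :: rb)) (\sum_(i < k | _) _) => n1 n2 n3 n4 n5.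
lia.
Qed.

Theorem lemma3 (V : finType) (e : rel V) (k : nat)
  (st : 'I_k -> V) (W : 'I_k -> seq V) (x y : V) :
  is_tree e ->
  optimal_covering e st W ->
  e x y ->
  (exists i j : 'I_k, [/\ i != j,
      traverses (st i) (W i) x y || traverses (st i) (W i) y x &
      traverses (st j) (W j) x y || traverses (st j) (W j) y x]) ->
  (forall i : 'I_k, ~~ traverses (st i) (W i) y x) \/
  (forall i : 'I_k, ~~ traverses (st i) (W i) x y).
Proof.
move=> [[_ irr] _ _] opt exy [i [j [nij Hi Hj]]].
have nxy : x != y by apply: contraTneq exy => ->; rewrite irr.
case: (boolP [exists b, traverses (st b) (W b) y x]) => [/existsP [b Tb]|/existsPn H];
  last by left.
right => c; apply/negP => Tc.
case: (eqVneq c b) => [ecb|ncb]; last exact: (swap opt nxy ncb Tc Tb).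
subst c.
have [d [ndb Td]] : exists d, d != b /\
    (traverses (st d) (W d) x y || traverses (st d) (W d) y x).
  case: (eqVneq i b) => [eib|nib]; last by exists i.
  by exists j; split => //; rewrite -eib eq_sym.
case/orP: Td => Td; first exact: (swap opt nxy ndb Td Tb).
by apply: (swap opt nxy _ Tc Td); rewrite eq_sym.
Qed.
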